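(* The acute hat has no single-piece unfolding. That is, there is no set $S$ of interior edges of the acute hat such that both of the following hold: (a) cutting the hat along $S$ leaves it connected; (b) the resulting surface can be laid out isometrically in the plane, face by face, without overlap (injectively).
   Context: A hat is a triangulated closed disk with seven vertices $a_1,a_2,a_3$ (on the boundary), $p_1,p_2,p_3$ and $o$ (the center), both of the latter groups interior. Indices are taken mod 3. It has nine triangular faces: - the brim triangles $a_i a_{i+1} p_{i+2}$; - the band triangles $a_i p_{i+1} p_{i+2}$; - the crown triangles $o\, p_i p_{i+1}$. Its boundary is the cycle $a_1a_2a_3$. The acute hat is the hat whose faces have the following metric shapes, all acute isosceles triangles: - each brim triangle $a_i a_{i+1} p_{i+2}$ has apex angle $85^\circ$ at $p_{i+2}$ and base angles $47.5^\circ$ at $a_i,a_{i+1}$; - each band triangle $a_i p_{i+1}p_{i+2}$ has apex angle $10^\circ$ at $a_i$ and base angles $85^\circ$; - each crown triangle $o\,p_ip_{i+1}$ is congruent to the band triangles, with apex angle $10^\circ$ at $o$ and base angles $85^\circ$. Consequently each $p_i$ has total angle $425^\circ$, so it is negatively curved, and $o$ has total angle $30^\circ$, so it is positively curved. The boundary edges $a_ia_{i+1}$ all have equal length. *)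

(* Defs.v *)
From Stdlib Require Import Reals Relations.
Open Scope R_scope.

Inductive I3 : Type := i0 | i1 | i2.
Definition nx (i : I3) : I3 := match i with i0 => i1 | i1 => i2 | i2 => i0 end.

(** The seven vertices of the hat: a_i (boundary), p_i, and the center o. *)
Inductive vtx : Type := A (i : I3) | P (i : I3) | O.

Inductive face : Type :=
  | Brim (i : I3)
  | Band (i : I3)
  | Crown (i : I3).

Definition face_verts (f : face) : vtx * vtx * vtx :=
  match f with
  | Brim i => (A i, A (nx i), P (nx (nx i)))
  | Band i => (A i, P (nx i), P (nx (nx i)))
  | Crown i => (O, P i, P (nx i))
  end.

Definition in_face (f : face) (v : vtx) : Prop :=
  let '(x, y, z) := face_verts f in v = x \/ v = y \/ v = z.

Definition interior_edge (u v : vtx) : Prop :=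
  u <> v /\ exists f g : face, f <> g /\
    in_face f u /\ in_face f v /\ in_face g u /\ in_face g v.

(** Metric of the acute hat (scale L = length of the legs a_i p_j and o p_j).
    An isosceles triangle with legs [leg] and apex angle [apex] has base
    [2 * leg * sin (apex/2)]. *)
Definition deg (x : R) : R := x * PI / 180.
Definition base_len (leg apex : R) : R := 2 * leg * sin (apex / 2).

(* Brim triangles: apex 85 deg at p, legs a-p, base a-a.
   Band triangles: apex 10 deg at a, legs a-p, base p-p.
   Crown triangles: congruent to band, apex 10 deg at o, legs o-p, base p-p. *)
Definition len (L : R) (u v : vtx) : R :=
  match u, v with
  | A _, P _ | P _, A _ | O, P _ | P _, O => L
  | P _, P _ => base_len L (deg 10)
  | A _, A _ => base_len L (deg 85)
  | _, _ => 0
  end.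

Definition pt := (R * R)%type.
Definition dist (p q : pt) : R :=
  sqrt ((fst p - fst q) ^ 2 + (snd p - snd q) ^ 2).

Definition cut (S : vtx -> vtx -> Prop) (u v : vtx) : Prop := S u v \/ S v u.

Definition glued (S : vtx -> vtx -> Prop) (f g : face) (u v : vtx) : Prop :=
  f <> g /\ u <> v /\ in_face f u /\ in_face f v /\ in_face g u /\ in_face g v
  /\ ~ cut S u v.

Definition cut_connected (S : vtx -> vtx -> Prop) : Prop :=
  forall f g : face,
    clos_refl_trans face (fun f g => exists u v, glued S f g u v) f g.

(** Points of the cut surface: a face together with barycentric weights
    on the vertex labels, supported on that face. *)
Definition valid_pt (f : face) (w : vtx -> R) : Prop :=
  (forall v, 0 <= w v) /\ (forall v, ~ in_face f v -> w v = 0) /\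
  let '(x, y, z) := face_verts f in w x + w y + w z = 1.

(** One gluing step of the cut surface: the same point seen in two faces
    glued along an uncut edge containing it. *)
Definition glue_step (S : vtx -> vtx -> Prop)
    (p1 p2 : face * (vtx -> R)) : Prop :=
  let (f, w) := p1 in let (g, w') := p2 in
  w = w' /\ exists u v, glued S f g u v /\
    (forall x, x <> u -> x <> v -> w x = 0).

Definition same_pt (S : vtx -> vtx -> Prop) : relation (face * (vtx -> R)) :=
  clos_refl_sym_trans _ (glue_step S).

(** Layout: each face f is placed with its corner v at [q f v]; the image of
    a point is the corresponding affine combination. *)
Definition layout := face -> vtx -> pt.

Definition img (q : layout) (f : face) (w : vtx -> R) : pt :=
  let '(x, y, z) := face_verts f in
  (w x * fst (q f x) + w y * fst (q f y) + w z * fst (q f z),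
   w x * snd (q f x) + w y * snd (q f y) + w z * snd (q f z)).

Definition is_unfolding (L : R) (S : vtx -> vtx -> Prop) (q : layout) : Prop :=
  (forall f u v, in_face f u -> in_face f v -> u <> v ->
     dist (q f u) (q f v) = len L u v) /\
  (forall f g u v, glued S f g u v -> q f u = q g u /\ q f v = q g v) /\
  (forall f g w w', valid_pt f w -> valid_pt g w' ->
     img q f w = img q g w' -> same_pt S (f, w) (g, w')).

(* Main.v *)
Require Import Defs.
From Stdlib Require Import Reals Relations Lra Psatz.
From Stdlib Require Import ClassicalEpsilon.
Open Scope R_scope.

Lemma vtx_eq_dec : forall u v : vtx, {u = v} + {u <> v}.
Proof. decide equality; decide equality. Qed.

Definition W3 (v x y : vtx) (a b c : R) : vtx -> R :=
  fun k => if vtx_eq_dec k v then a else if vtx_eq_dec k x then b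
           else if vtx_eq_dec k y then c else 0.

Lemma fv_distinct f : let '(x,y,z) := face_verts f in x<>y /\ y<>z /\ x<>z.
Proof. destruct f as [i|i|i]; destruct i; simpl; repeat split; discriminate. Qed.

Lemma sum3 f v x y (h : vtx -> R) :
  in_face f v -> in_face f x -> in_face f y -> v<>x -> x<>y -> v<>y ->
  (let '(a,b,c) := face_verts f in h a + h b + h c) = h v + h x + h y.
Proof.
  unfold in_face. pose proof (fv_distinct f) as D.
  destruct (face_verts f) as [[a b] c].
  intros Hv Hx Hy n1 n2 n3. destruct D as [d1 [d2 d3]].
  destruct Hv as [ -> | [ -> | -> ] ]; destruct Hx as [ -> | [ -> | -> ] ]; destruct Hy as [ -> | [ -> | -> ] ];
  try congruence; ring.
Qed.

Lemma img_eq q f w : img q f w =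
  ((let '(a,b,c) := face_verts f in w a * fst (q f a) + w b * fst (q f b) + w c * fst (q f c)),
   (let '(a,b,c) := face_verts f in w a * snd (q f a) + w b * snd (q f b) + w c * snd (q f c))).
Proof. unfold img. destruct (face_verts f) as [[a b] c]. reflexivity. Qed.

Lemma W3_v v x y a b c : W3 v x y a b c v = a.
Proof. unfold W3. destruct (vtx_eq_dec v v); congruence. Qed.
Lemma W3_x v x y a b c : x <> v -> W3 v x y a b c x = b.
Proof. unfold W3. intros. destruct (vtx_eq_dec x v); [congruence|].
  destruct (vtx_eq_dec x x); congruence. Qed.
Lemma W3_y v x y a b c : y <> v -> y <> x -> W3 v x y a b c y = c.
Proof. unfold W3. intros. destruct (vtx_eq_dec y v); [congruence|].
  destruct (vtx_eq_dec y x); [congruence|]. destruct (vtx_eq_dec y y); congruence. Qed.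

Lemma in_face_dec f k : in_face f k \/ ~ in_face f k.
Proof. unfold in_face. destruct (face_verts f) as [[a b] c].
  destruct (vtx_eq_dec k a); destruct (vtx_eq_dec k b); destruct (vtx_eq_dec k c); tauto. Qed.

Lemma W3_valid f v x y a b c :
  in_face f v -> in_face f x -> in_face f y -> v<>x -> x<>y -> v<>y ->
  0 <= a -> 0 <= b -> 0 <= c -> a + b + c = 1 -> valid_pt f (W3 v x y a b c).
Proof.
  intros Hv Hx Hy n1 n2 n3 Ha Hb Hc Hs. unfold valid_pt. split; [|split].
  - intro k. unfold W3. repeat destruct vtx_eq_dec; lra.
  - intros k Hk. unfold W3. destruct (vtx_eq_dec k v); [subst; tauto|].
    destruct (vtx_eq_dec k x); [subst; tauto|].
    destruct (vtx_eq_dec k y); [subst; tauto|]. reflexivity.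
  - pose proof (sum3 f v x y (W3 v x y a b c) Hv Hx Hy n1 n2 n3) as E.
    destruct (face_verts f) as [[a0 b0] c0]. rewrite E.
    rewrite W3_v, W3_x, W3_y by congruence. exact Hs.
Qed.

Lemma img_W3 q f v x y a b c :
  in_face f v -> in_face f x -> in_face f y -> v<>x -> x<>y -> v<>y ->
  img q f (W3 v x y a b c) =
   (a * fst (q f v) + b * fst (q f x) + c * fst (q f y),
    a * snd (q f v) + b * snd (q f x) + c * snd (q f y)).
Proof.
  intros Hv Hx Hy n1 n2 n3. rewrite img_eq.
  pose proof (sum3 f v x y (fun k => W3 v x y a b c k * fst (q f k)) Hv Hx Hy n1 n2 n3) as E1.
  pose proof (sum3 f v x y (fun k => W3 v x y a b c k * snd (q f k)) Hv Hx Hy n1 n2 n3) as E2.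
  simpl in E1, E2.
  destruct (face_verts f) as [[a0 b0] c0]. rewrite E1, E2.
  rewrite W3_v, W3_x, W3_y by congruence. reflexivity.
Qed.

Lemma same_pt_inv S p1 p2 : same_pt S p1 p2 ->
  snd p1 = snd p2 /\ (p1 = p2 \/ exists u v, forall x, x<>u -> x<>v -> snd p1 x = 0).
Proof.
  induction 1 as [p1 p2 H|p|p1 p2 H [IH1 IH2]|p1 p2 p3 H1 [IH1 IH2] H2 [IH3 IH4]].
  - destruct p1 as [f w], p2 as [g w']. simpl in H. destruct H as [Hw [u [v [_ Hz]]]].
    simpl. split; [exact Hw|]. right. exists u, v. exact Hz.
  - split; auto.
  - split; [auto|]. destruct IH2 as [E|[u [v Hz]]]; [left; auto|].
    right. exists u, v. rewrite <- IH1. exact Hz.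
  - split; [congruence|]. destruct IH2 as [E|[u [v Hz]]].
    + subst. destruct IH4 as [E|[u [v Hz]]]; [left; auto|right; exists u, v; exact Hz].
    + right. exists u, v. exact Hz.
Qed.

Lemma no_overlap L S q f g v x y v' x' y' a b c a' b' c' :
  is_unfolding L S q -> f <> g ->
  in_face f v -> in_face f x -> in_face f y -> v<>x -> x<>y -> v<>y ->
  in_face g v' -> in_face g x' -> in_face g y' -> v'<>x' -> x'<>y' -> v'<>y' ->
  0 < a -> 0 < b -> 0 < c -> a + b + c = 1 ->
  0 <= a' -> 0 <= b' -> 0 <= c' -> a' + b' + c' = 1 ->
  a * fst (q f v) + b * fst (q f x) + c * fst (q f y) =
   a' * fst (q g v') + b' * fst (q g x') + c' * fst (q g y') ->
  a * snd (q f v) + b * snd (q f x) + c * snd (q f y) =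
   a' * snd (q g v') + b' * snd (q g x') + c' * snd (q g y') -> False.
Proof.
  intros [_ [_ Hinj]] Hfg Hv Hx Hy n1 n2 n3 Hv' Hx' Hy' n1' n2' n3'
    Ha Hb Hc Hs Ha' Hb' Hc' Hs' E1 E2.
  assert (H := Hinj f g (W3 v x y a b c) (W3 v' x' y' a' b' c')
    (W3_valid f v x y a b c Hv Hx Hy n1 n2 n3 ltac:(lra) ltac:(lra) ltac:(lra) Hs)
    (W3_valid g v' x' y' a' b' c' Hv' Hx' Hy' n1' n2' n3' Ha' Hb' Hc' Hs')).
  rewrite img_W3, img_W3 in H by assumption.
  specialize (H ltac:(rewrite E1, E2; reflexivity)).
  apply same_pt_inv in H. destruct H as [_ [E|[u0 [v0 Hz]]]].
  - injection E; intros; congruence.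
  - simpl in Hz.
    assert (Zv := Hz v). assert (Zx := Hz x). assert (Zy := Hz y).
    rewrite W3_v in Zv. rewrite W3_x in Zx by congruence. rewrite W3_y in Zy by congruence.
    destruct (vtx_eq_dec v u0); destruct (vtx_eq_dec v v0);
    destruct (vtx_eq_dec x u0); destruct (vtx_eq_dec x v0);
    destruct (vtx_eq_dec y u0); destruct (vtx_eq_dec y v0);
    try congruence;
    try (specialize (Zv ltac:(assumption) ltac:(assumption)); lra);
    try (specialize (Zx ltac:(assumption) ltac:(assumption)); lra);
    try (specialize (Zy ltac:(assumption) ltac:(assumption)); lra).
Qed.
Definition d2 (p p' : pt) := (fst p - fst p')^2 + (snd p - snd p')^2.
Definition orth (u w : pt) := fst u ^2 + snd u ^2 = 1 /\ fst w ^2 + snd w ^2 = 1 /\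
   fst u * fst w + snd u * snd w = 0.
Definition at_ (V u w : pt) (r t : R) : pt :=
  (fst V + r * (cos t * fst u + sin t * fst w), snd V + r * (cos t * snd u + sin t * snd w)).

Lemma dist_d2 p p' l : Defs.dist p p' = l -> d2 p p' = l^2.
Proof. unfold Defs.dist, d2. intro H. rewrite <- H.
  rewrite pow2_sqrt; [reflexivity|]. apply Rplus_le_le_0_compat; apply pow2_ge_0. Qed.

Lemma orth_cols u1 u2 w1 w2 : u1^2+u2^2 = 1 -> w1^2+w2^2=1 -> u1*w1+u2*w2 = 0 ->
  u1^2 + w1^2 = 1 /\ u2^2 + w2^2 = 1 /\ u1*u2 + w1*w2 = 0.
Proof.
  intros H1 H2 H3. set (dl := u1*w2 - u2*w1).
  assert (Hd : dl^2 = 1).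
  { replace (dl^2) with ((u1^2+u2^2)*(w1^2+w2^2) - (u1*w1+u2*w2)^2) by (unfold dl; ring).
    rewrite H1, H2, H3. ring. }
  assert (E1 : w1 = - dl * u2).
  { replace w1 with (u1*(u1*w1+u2*w2) - w1*(u1^2+u2^2-1) + (- dl*u2)) by (unfold dl; ring).
    rewrite H1, H3. ring. }
  assert (E2 : w2 = dl * u1).
  { replace w2 with (u2*(u1*w1+u2*w2) - w2*(u1^2+u2^2-1) + (dl*u1)) by (unfold dl; ring).
    rewrite H1, H3. ring. }
  rewrite E1, E2. repeat split.
  - replace (u1 ^ 2 + (- dl * u2) ^ 2) with (u1^2 + dl^2 * u2^2) by ring. rewrite Hd. lra.
  - replace (u2 ^ 2 + (dl * u1) ^ 2) with (u2^2 + dl^2 * u1^2) by ring. rewrite Hd. lra.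
  - replace (u1 * u2 + - dl * u2 * (dl * u1)) with (u1*u2*(1 - dl^2)) by ring. rewrite Hd. ring.
Qed.

Lemma hinge V u w X2 r1 r2 al th : orth u w -> 0 < r1 -> 0 < r2 ->
  d2 X2 V = r2^2 ->
  d2 X2 (at_ V u w r1 al) = r1^2 + r2^2 - 2*r1*r2*cos th ->
  X2 = at_ V u w r2 (al + th) \/ X2 = at_ V u w r2 (al - th).
Proof.
  destruct V as [v1 v2], u as [u1 u2], w as [w1 w2], X2 as [x2 y2].
  unfold orth, d2, at_; cbn [fst snd]. intros [O1 [O2 O3]] Hr1 Hr2 H1 H2.
  destruct (orth_cols u1 u2 w1 w2 O1 O2 O3) as [C1 [C2 C3]].
  set (D1 := x2 - v1) in *. set (D2 := y2 - v2) in *.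
  set (X := D1*u1 + D2*u2). set (Y := D1*w1 + D2*w2).
  assert (K1 : D1 = X*u1 + Y*w1).
  { unfold X, Y.
    replace ((D1 * u1 + D2 * u2) * u1 + (D1 * w1 + D2 * w2) * w1)
      with (D1*(u1^2+w1^2) + D2*(u1*u2+w1*w2)) by ring. rewrite C1, C3. ring. }
  assert (K2 : D2 = X*u2 + Y*w2).
  { unfold X, Y.
    replace ((D1 * u1 + D2 * u2) * u2 + (D1 * w1 + D2 * w2) * w2)
      with (D1*(u1*u2+w1*w2) + D2*(u2^2+w2^2)) by ring. rewrite C2, C3. ring. }
  assert (N : D1^2 + D2^2 = X^2 + Y^2).
  { rewrite K1, K2 at 1.
    replace ((X * u1 + Y * w1) ^ 2 + (X * u2 + Y * w2) ^ 2)
      with (X^2*(u1^2+u2^2) + Y^2*(w1^2+w2^2) + 2*X*Y*(u1*w1+u2*w2)) by ring.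
    rewrite O1, O2, O3. ring. }
  set (ca := cos al) in *. set (sa := sin al) in *.
  assert (Pa : ca^2 + sa^2 = 1) by (unfold ca, sa; pose proof (sin2_cos2 al) as T; unfold Rsqr in T; nra).
  assert (Ex : x2 = v1 + D1) by (unfold D1; ring).
  assert (Ey : y2 = v2 + D2) by (unfold D2; ring).
  rewrite Ex, Ey in H2.
  assert (Eq : (v1 + D1 - (v1 + r1*(ca*u1+sa*w1)))^2 + (v2 + D2 - (v2 + r1*(ca*u2+sa*w2)))^2
     = (D1^2+D2^2) - 2*r1*(ca*X+sa*Y) + r1^2*(ca^2*(u1^2+u2^2) + 2*ca*sa*(u1*w1+u2*w2) + sa^2*(w1^2+w2^2)))
    by (unfold X, Y; ring).
  rewrite O1, O2, O3, H1 in Eq.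
  replace (ca ^ 2 * 1 + 2 * ca * sa * 0 + sa ^ 2 * 1) with (ca^2+sa^2) in Eq by ring.
  rewrite Pa in Eq.
  assert (Hc : ca*X + sa*Y = r2 * cos th).
  { apply Rmult_eq_reg_l with (2*r1); [|lra]. lra. }
  assert (Hs2 : (-sa*X + ca*Y)^2 = (r2 * sin th)^2).
  { assert (T : (ca*X+sa*Y)^2 + (-sa*X+ca*Y)^2 = (X^2+Y^2)*(ca^2+sa^2)) by ring.
    rewrite Pa, <- N, H1, Hc in T.
    pose proof (sin2_cos2 th) as T2. unfold Rsqr in T2.
    replace ((r2 * sin th)^2) with (r2^2 * (sin th * sin th)) by ring.
    replace (sin th * sin th) with (1 - cos th * cos th) by lra. nra. }
  assert (HX : X = (ca*X+sa*Y)*ca - (-sa*X+ca*Y)*sa).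
  { replace ((ca*X+sa*Y)*ca - (-sa*X+ca*Y)*sa) with (X*(ca^2+sa^2)) by ring. rewrite Pa; ring. }
  assert (HY : Y = (ca*X+sa*Y)*sa + (-sa*X+ca*Y)*ca).
  { replace ((ca*X+sa*Y)*sa + (-sa*X+ca*Y)*ca) with (Y*(ca^2+sa^2)) by ring. rewrite Pa; ring. }
  assert (Hs : (-sa*X+ca*Y) = r2 * sin th \/ (-sa*X+ca*Y) = - (r2 * sin th)).
  { assert (T : ((-sa*X+ca*Y) - r2*sin th) * ((-sa*X+ca*Y) + r2*sin th) = 0).
    { replace (((-sa*X+ca*Y) - r2*sin th) * ((-sa*X+ca*Y) + r2*sin th))
        with ((-sa*X+ca*Y)^2 - (r2*sin th)^2) by ring. rewrite Hs2. ring. }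
    apply Rmult_integral in T. destruct T; [left|right]; lra. }
  rewrite Hc in HX, HY.
  rewrite Ex, Ey, K1, K2.
  destruct Hs as [Hs|Hs]; rewrite Hs in HX, HY; [left|right];
   [rewrite cos_plus, sin_plus | rewrite cos_minus, sin_minus];
   fold ca sa; rewrite HX, HY; f_equal; ring.
Qed.

Lemma frame V X0 X1 r0 r1 th : 0 < r0 -> 0 < r1 ->
  d2 X0 V = r0^2 -> d2 X1 V = r1^2 -> d2 X1 X0 = r0^2 + r1^2 - 2*r0*r1*cos th ->
  exists u w, orth u w /\ X0 = at_ V u w r0 0 /\ X1 = at_ V u w r1 th.
Proof.
  intros H0 H1 E0 E1 E2.
  assert (Hab : ((fst X0 - fst V)/r0)^2 + ((snd X0 - snd V)/r0)^2 = 1).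
  { replace (((fst X0 - fst V) / r0) ^ 2 + ((snd X0 - snd V) / r0) ^ 2)
        with (((fst X0 - fst V) ^ 2 + (snd X0 - snd V) ^ 2) / r0^2) by (field; lra).
    unfold d2 in E0. rewrite E0. field. lra. }
  set (a := (fst X0 - fst V)/r0) in *. set (b := (snd X0 - snd V)/r0) in *.
  assert (Ou : orth (a,b) (-b,a)).
  { unfold orth; cbn [fst snd]. split; [exact Hab|split]; [lra|ring]. }
  assert (HX0 : X0 = at_ V (a,b) (-b,a) r0 0).
  { unfold at_, a, b. cbn [fst snd]. rewrite cos_0, sin_0. destruct X0 as [x0 y0]; cbn [fst snd].
    f_equal; field; lra. }
  rewrite HX0 in E2.
  destruct (hinge V (a,b) (-b,a) X1 r0 r1 0 th Ou H0 H1 E1 E2) as [Hp|Hm].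
  - exists (a,b), (-b,a). split; [exact Ou|split; [exact HX0|]]. rewrite Hp. f_equal; f_equal; ring.
  - exists (a,b), (b,-a). split; [|split].
    + unfold orth in *; cbn [fst snd]. split; [exact Hab|split]; [lra|ring].
    + rewrite HX0. unfold at_. cbn [fst snd]. rewrite cos_0, sin_0. f_equal; ring.
    + rewrite Hm. unfold at_. cbn [fst snd]. rewrite Rminus_0_l, cos_neg, sin_neg. f_equal; ring.
Qed.

Lemma I4c A B C : sin (B-A) * cos C = sin (B-C) * cos A + sin (C-A) * cos B.
Proof. rewrite !sin_minus. ring. Qed.
Lemma I4s A B C : sin (B-A) * sin C = sin (B-C) * sin A + sin (C-A) * sin B.
Proof. rewrite !sin_minus. ring. Qed.

Lemma small_s r1 r2 r3 r4 : 0 < r1 -> 0 < r2 -> 0 < r3 -> 0 < r4 ->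
  exists s, 0 < s /\ 0 < 1 - s/r1 - s/r2 /\ 0 < 1 - s/r3 - s/r4.
Proof.
  intros H1 H2 H3 H4.
  assert (i1 : 0 < /r1) by (apply Rinv_0_lt_compat; lra).
  assert (i2 : 0 < /r2) by (apply Rinv_0_lt_compat; lra).
  assert (i3 : 0 < /r3) by (apply Rinv_0_lt_compat; lra).
  assert (i4 : 0 < /r4) by (apply Rinv_0_lt_compat; lra).
  set (Q := /r1 + /r2 + /r3 + /r4).
  assert (HQ : 0 < Q) by (unfold Q; lra).
  exists (/(4*Q)).
  assert (Hs : 0 < /(4*Q)) by (apply Rinv_0_lt_compat; lra).
  assert (T : /(4*Q) * /r1 + /(4*Q) * /r2 + /(4*Q) * /r3 + /(4*Q) * /r4 = /4)
    by (replace (/(4*Q) * /r1 + /(4*Q) * /r2 + /(4*Q) * /r3 + /(4*Q) * /r4) with (/(4*Q)*Q)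
         by (unfold Q; ring); field; lra).
  assert (0 < /(4*Q) * /r1) by (apply Rmult_lt_0_compat; lra).
  assert (0 < /(4*Q) * /r2) by (apply Rmult_lt_0_compat; lra).
  assert (0 < /(4*Q) * /r3) by (apply Rmult_lt_0_compat; lra).
  assert (0 < /(4*Q) * /r4) by (apply Rmult_lt_0_compat; lra).
  unfold Rdiv. lra.
Qed.

Lemma wedge_overlap L S q f g v x y v' x' y' V u w r1 r2 r3 r4 A B :
  is_unfolding L S q -> f <> g ->
  in_face f v -> in_face f x -> in_face f y -> v<>x -> x<>y -> v<>y ->
  in_face g v' -> in_face g x' -> in_face g y' -> v'<>x' -> x'<>y' -> v'<>y' ->
  q f v = V -> q f x = at_ V u w r1 A -> q f y = at_ V u w r2 B ->
  q g v' = V -> q g x' = at_ V u w r3 A -> q g y' = at_ V u w r4 B ->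
  0 < r1 -> 0 < r2 -> 0 < r3 -> 0 < r4 -> False.
Proof.
  intros HU Hfg Hv Hx Hy n1 n2 n3 Hv' Hx' Hy' n1' n2' n3' Q1 Q2 Q3 Q4 Q5 Q6 R1 R2 R3 R4.
  destruct (small_s r1 r2 r3 r4 R1 R2 R3 R4) as [s [Hs [Ha Ha']]].
  apply (no_overlap L S q f g v x y v' x' y' (1 - s/r1 - s/r2) (s/r1) (s/r2)
           (1 - s/r3 - s/r4) (s/r3) (s/r4) HU Hfg Hv Hx Hy n1 n2 n3 Hv' Hx' Hy' n1' n2' n3');
   try lra; try (unfold Rdiv; apply Rmult_lt_0_compat; try apply Rinv_0_lt_compat; lra);
   try (unfold Rdiv; apply Rlt_le, Rmult_lt_0_compat; try apply Rinv_0_lt_compat; lra);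
   rewrite Q1, Q2, Q3, Q4, Q5, Q6; unfold at_; cbn [fst snd]; field; lra.
Qed.

Lemma ray_in_wedge L S q f g v x y v' x' y' V u w r1 r2 r3 A B C :
  is_unfolding L S q -> f <> g ->
  in_face f v -> in_face f x -> in_face f y -> v<>x -> x<>y -> v<>y ->
  in_face g v' -> in_face g x' -> in_face g y' -> v'<>x' -> x'<>y' -> v'<>y' ->
  q f v = V -> q f x = at_ V u w r1 A -> q f y = at_ V u w r2 B ->
  q g v' = V -> q g x' = at_ V u w r3 C ->
  0 < r1 -> 0 < r2 -> 0 < r3 -> 0 < sin (B - A) -> 0 < sin (B - C) -> 0 < sin (C - A) -> False.
Proof.
  intros HU Hfg Hv Hx Hy n1 n2 n3 Hv' Hx' Hy' n1' n2' n3' Q1 Q2 Q3 Q4 Q5 R1 R2 R3 S1 S2 S3.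
  set (K1 := r3 * sin (B - C) / (sin (B - A) * r1)).
  set (K2 := r3 * sin (C - A) / (sin (B - A) * r2)).
  assert (HK1 : 0 < K1).
  { unfold K1. unfold Rdiv. apply Rmult_lt_0_compat; [apply Rmult_lt_0_compat; lra|].
    apply Rinv_0_lt_compat, Rmult_lt_0_compat; lra. }
  assert (HK2 : 0 < K2).
  { unfold K2. unfold Rdiv. apply Rmult_lt_0_compat; [apply Rmult_lt_0_compat; lra|].
    apply Rinv_0_lt_compat, Rmult_lt_0_compat; lra. }
  set (t := / (2 * (1 + K1 + K2))).
  assert (Ht : 0 < t) by (apply Rinv_0_lt_compat; lra).
  assert (Ht2 : t * (1 + K1 + K2) = /2) by (unfold t; field; lra).
  assert (P1 : 0 < t * K1) by (apply Rmult_lt_0_compat; lra).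
  assert (P2 : 0 < t * K2) by (apply Rmult_lt_0_compat; lra).
  apply (no_overlap L S q f g v x y v' x' y' (1 - t*K1 - t*K2) (t*K1) (t*K2)
           (1 - t) t 0 HU Hfg Hv Hx Hy n1 n2 n3 Hv' Hx' Hy' n1' n2' n3'); try lra;
  rewrite Q1, Q2, Q3, Q4, Q5; unfold at_; cbn [fst snd]; unfold K1, K2.
  - replace (cos C) with ((sin (B-C) * cos A + sin (C-A) * cos B) / sin (B - A))
      by (rewrite <- I4c; field; lra).
    replace (sin C) with ((sin (B-C) * sin A + sin (C-A) * sin B) / sin (B - A))
      by (rewrite <- I4s; field; lra).
    field. lra.
  - replace (cos C) with ((sin (B-C) * cos A + sin (C-A) * cos B) / sin (B - A))
      by (rewrite <- I4c; field; lra).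
    replace (sin C) with ((sin (B-C) * sin A + sin (C-A) * sin B) / sin (B - A))
      by (rewrite <- I4s; field; lra).
    field. lra.
Qed.

Lemma d2_sym p p' : d2 p p' = d2 p' p.
Proof. unfold d2. ring. Qed.

Lemma HU_d2 L S q f u v : is_unfolding L S q -> in_face f u -> in_face f v -> u <> v ->
  d2 (q f u) (q f v) = (len L u v)^2.
Proof. intros [H _] Hu Hv Huv. apply dist_d2. apply H; assumption. Qed.

Lemma fan_step L S q f g v n0 n1 n2 V u w r0 r1 r2 th be :
  is_unfolding L S q -> orth u w ->
  in_face f v -> in_face f n0 -> in_face f n1 -> in_face g v -> in_face g n1 -> in_face g n2 ->
  v <> n0 -> n0 <> n1 -> v <> n1 -> v <> n2 -> n1 <> n2 -> f <> g -> ~ cut S v n1 ->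
  0 < r0 -> 0 < r1 -> 0 < r2 -> len L v n2 = r2 ->
  (len L n1 n2)^2 = r1^2 + r2^2 - 2*r1*r2*cos th ->
  q f v = V -> q f n0 = at_ V u w r0 (be - th) -> q f n1 = at_ V u w r1 be ->
  q g v = V /\ q g n1 = at_ V u w r1 be /\ q g n2 = at_ V u w r2 (be + th).
Proof.
  intros HU Ou Fv F0 F1 Gv G1 G2 d1 d2' d3 d4 d5 Hfg Hc R0 R1 R2 L2 LC Q0 Q1 Q2.
  assert (Gl : glued S f g v n1) by (repeat split; assumption).
  destruct HU as [HD [HG HI]] eqn:EHU.
  destruct (HG f g v n1 Gl) as [E1 E2].
  assert (QV : q g v = V) by congruence.
  assert (QN1 : q g n1 = at_ V u w r1 be) by congruence.
  split; [exact QV|split; [exact QN1|]].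
  assert (D1 : d2 (q g n2) V = r2^2).
  { rewrite <- QV, d2_sym, <- L2. apply (HU_d2 L S q); auto. }
  assert (D2 : d2 (q g n2) (at_ V u w r1 be) = r1^2 + r2^2 - 2*r1*r2*cos th).
  { rewrite <- QN1, d2_sym, <- LC. apply (HU_d2 L S q); auto. }
  destruct (hinge V u w (q g n2) r1 r2 be th Ou R1 R2 D1 D2) as [H|H]; [exact H|].
  exfalso.
  apply (wedge_overlap L S q f g v n0 n1 v n2 n1 V u w r0 r1 r2 r1 (be - th) be);
    auto.
Qed.
Definition th85 := deg 85.
Definition dl5 := deg 5.

Lemma PIpos : 0 < PI. Proof. apply PI_RGT_0. Qed.

Lemma sin_deg_pos k : 0 < k < 180 -> 0 < sin (deg k).
Proof. intros [H1 H2]. unfold deg. pose proof PIpos. apply sin_gt_0.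
  - apply Rmult_lt_0_compat; [|lra]. nra.
  - apply Rmult_lt_reg_r with 180; [lra|]. field_simplify; nra. Qed.

Lemma th_dl : th85 = PI/2 - dl5.
Proof. unfold th85, dl5, deg. field. Qed.

Lemma cos_th : cos th85 = sin dl5.
Proof. rewrite th_dl. apply cos_shift. Qed.
Lemma sin_th : sin th85 = cos dl5.
Proof. rewrite th_dl. apply sin_shift. Qed.

Lemma dl_pos : 0 < sin dl5.
Proof. apply sin_deg_pos; lra. Qed.

Lemma dd_eq L : base_len L (deg 10) = 2 * L * cos th85.
Proof. unfold base_len. rewrite cos_th. unfold dl5. f_equal. f_equal. unfold deg. field. Qed.

Lemma base_sq L x : (base_len L x)^2 = L^2 + L^2 - 2*L*L*cos x.
Proof. unfold base_len. replace x with (2 * (x/2)) at 2 by field.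
  rewrite cos_2a_sin. ring. Qed.

Lemma dd_pos L : 0 < L -> 0 < base_len L (deg 10).
Proof. intro H. rewrite dd_eq, cos_th. pose proof dl_pos. nra. Qed.

Lemma LC_Ld L : L^2 = L^2 + (base_len L (deg 10))^2 - 2 * L * base_len L (deg 10) * cos th85.
Proof. rewrite dd_eq. ring. Qed.
Lemma LC_dL L : L^2 = (base_len L (deg 10))^2 + L^2 - 2 * base_len L (deg 10) * L * cos th85.
Proof. rewrite dd_eq. ring. Qed.
Lemma LC_LL L : (base_len L (deg 85))^2 = L^2 + L^2 - 2 * L * L * cos th85.
Proof. apply base_sq. Qed.
Lemma LC_O L : (base_len L (deg 10))^2 = L^2 + L^2 - 2 * L * L * cos (deg 10).
Proof. apply base_sq. Qed.

Lemma sin_p2pi x : sin (x + 2*PI) = sin x.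
Proof. rewrite sin_plus, cos_2PI, sin_2PI. ring. Qed.
Lemma sin_p2 x : sin (x + PI/2) = cos x.
Proof. rewrite sin_plus, cos_PI2, sin_PI2. ring. Qed.

Lemma red1 : sin (th85 - 4*th85) = cos (3*dl5).
Proof. rewrite th_dl. replace (PI / 2 - dl5 - 4 * (PI / 2 - dl5)) with ((3*dl5 + PI/2) + - (2*PI)) by field.
  rewrite <- (sin_p2pi (3 * dl5 + PI / 2 + - (2 * PI))).
  replace (3 * dl5 + PI / 2 + - (2 * PI) + 2 * PI) with (3*dl5 + PI/2) by ring. apply sin_p2. Qed.
Lemma red2 : sin (th85 - 7*th85) = - sin (6*dl5).
Proof. rewrite th_dl. replace (PI / 2 - dl5 - 7 * (PI / 2 - dl5)) with ((6*dl5 + PI) + - (2*PI) + - (2*PI)) by field.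
  rewrite <- (sin_p2pi (6*dl5 + PI + - (2 * PI) + - (2*PI))).
  replace (6*dl5 + PI + - (2 * PI) + - (2 * PI) + 2 * PI) with (6*dl5 + PI + - (2*PI)) by ring.
  rewrite <- (sin_p2pi (6*dl5 + PI + - (2 * PI))).
  replace (6*dl5 + PI + - (2 * PI) + 2 * PI) with (6*dl5 + PI) by ring. apply neg_sin. Qed.
Lemma red3 : sin (4*th85) = - sin (4*dl5).
Proof. rewrite th_dl. replace (4 * (PI / 2 - dl5)) with (- (4*dl5) + 2*PI) by field.
  rewrite sin_p2pi. apply sin_neg. Qed.
Lemma red4 : sin (7*th85) = - cos (7*dl5).
Proof. rewrite th_dl. replace (7 * (PI / 2 - dl5)) with ((- (7*dl5) + PI/2) + PI + 2*PI) by field.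
  rewrite sin_p2pi, neg_sin, sin_p2, cos_neg. reflexivity. Qed.

Lemma dl6 : 6*dl5 = PI/6.
Proof. unfold dl5, deg. field. Qed.

Lemma NK1 : 0 < sin (th85 - 4*th85) - sin (th85 - 7*th85).
Proof. rewrite red1, red2, dl6, sin_PI6. pose proof PIpos.
  assert (0 < cos (3*dl5)) by (apply cos_gt_0; unfold dl5, deg; lra). lra. Qed.

Lemma NK2 : 0 < sin (4*th85) - sin (7*th85).
Proof. rewrite red3, red4. pose proof PIpos.
  replace (cos (7*dl5)) with (sin (11*dl5)).
  2:{ replace (11*dl5) with (PI/2 - 7*dl5) by (unfold dl5, deg; field). apply sin_shift. }
  assert (sin (4*dl5) < sin (11*dl5)) by (apply sin_increasing_1; unfold dl5, deg; lra). lra. Qed.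

Lemma NK3 : 0 < sin th85 - 2 * cos th85 * (sin (th85 - 4*th85) - sin (th85 - 7*th85))
   - (sin (4*th85) - sin (7*th85)).
Proof. rewrite red1, red2, red3, red4, dl6, sin_PI6, sin_th, cos_th. pose proof PIpos.
  assert (E : 2 * sin dl5 * cos (3*dl5) = sin (4*dl5) - sin (2*dl5)).
  { replace (4*dl5) with (3*dl5 + dl5) by ring. replace (2*dl5) with (3*dl5 - dl5) by ring.
    rewrite sin_plus, sin_minus. ring. }
  assert (cos (7*dl5) < cos dl5) by (apply cos_decreasing_1; unfold dl5, deg; lra).
  assert (sin dl5 < sin (2*dl5)) by (apply sin_increasing_1; unfold dl5, deg; lra).
  nra. Qed.

Lemma cos30 : cos (3 * deg 10) <> 1.
Proof. replace (3 * deg 10) with (PI/6) by (unfold deg; field). rewrite cos_PI6.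
  intro H. assert (sqrt 3 = 2) by lra.
  assert (sqrt 3 * sqrt 3 = 3) by (apply sqrt_sqrt; lra). nra. Qed.

Lemma len_sym L u v : len L u v = len L v u.
Proof. destruct u, v; reflexivity. Qed.

Lemma fan_step2 L S q f g v n0 n1 n2 V u w r0 r1 r2 th a be c :
  is_unfolding L S q -> orth u w ->
  in_face f v -> in_face f n0 -> in_face f n1 -> in_face g v -> in_face g n1 -> in_face g n2 ->
  v <> n0 -> n0 <> n1 -> v <> n1 -> v <> n2 -> n1 <> n2 -> f <> g -> ~ cut S v n1 ->
  0 < r0 -> 0 < r1 -> 0 < r2 -> len L v n2 = r2 ->
  (len L n1 n2)^2 = r1^2 + r2^2 - 2*r1*r2*cos th ->
  q f v = V -> q f n0 = at_ V u w r0 a -> q f n1 = at_ V u w r1 be ->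
  be = a + th -> c = be + th ->
  q g v = V /\ q g n1 = at_ V u w r1 be /\ q g n2 = at_ V u w r2 c.
Proof.
  intros HU Ou Fv F0 F1 Gv G1 G2 d1 d2' d3 d4 d5 Hfg Hc R0 R1 R2 L2 LC Q0 Q1 Q2 Ea Ec.
  subst c. assert (Ha : a = be - th) by lra. subst a.
  apply (fan_step L S q f g v n0 n1 n2 V u w r0 r1 r2 th be); assumption.
Qed.

Lemma at_2pi V u w r : at_ V u w r (2*PI) = at_ V u w r 0.
Proof. unfold at_. rewrite cos_2PI, sin_2PI, cos_0, sin_0. reflexivity. Qed.

Lemma fan5 L S q F1 F2 F3 F4 F5 v n0 n1 n2 n3 n4 n5 r0 r1 r2 r3 r4 r5 :
  is_unfolding L S q ->
  in_face F1 v -> in_face F1 n0 -> in_face F1 n1 ->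
  in_face F2 v -> in_face F2 n1 -> in_face F2 n2 ->
  in_face F3 v -> in_face F3 n2 -> in_face F3 n3 ->
  in_face F4 v -> in_face F4 n3 -> in_face F4 n4 ->
  in_face F5 v -> in_face F5 n4 -> in_face F5 n5 ->
  v <> n0 -> v <> n1 -> v <> n2 -> v <> n3 -> v <> n4 -> v <> n5 ->
  n0 <> n1 -> n1 <> n2 -> n2 <> n3 -> n3 <> n4 -> n4 <> n5 ->
  F1 <> F2 -> F2 <> F3 -> F3 <> F4 -> F4 <> F5 -> F5 <> F1 ->
  ~ cut S v n1 -> ~ cut S v n2 -> ~ cut S v n3 -> ~ cut S v n4 ->
  0 < r0 -> 0 < r1 -> 0 < r2 -> 0 < r3 -> 0 < r4 -> 0 < r5 ->
  len L v n0 = r0 -> len L v n1 = r1 -> len L v n2 = r2 -> len L v n3 = r3 ->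
  len L v n4 = r4 -> len L v n5 = r5 ->
  (len L n0 n1)^2 = r0^2 + r1^2 - 2*r0*r1*cos th85 ->
  (len L n1 n2)^2 = r1^2 + r2^2 - 2*r1*r2*cos th85 ->
  (len L n2 n3)^2 = r2^2 + r3^2 - 2*r2*r3*cos th85 ->
  (len L n3 n4)^2 = r3^2 + r4^2 - 2*r3*r4*cos th85 ->
  (len L n4 n5)^2 = r4^2 + r5^2 - 2*r4*r5*cos th85 ->
  False.
Proof.
  intros HU A1 A2 A3 B1 B2 B3 C1 C2 C3 D1 D2 D3 E1 E2 E3 v0 v1 v2 v3 v4 v5 m1 m2 m3 m4 m5
    f12 f23 f34 f45 f51 c1 c2 c3 c4 R0 R1 R2 R3 R4 R5 L0 L1 L2 L3 L4 L5 Q1 Q2 Q3 Q4 Q5.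
  set (V := q F1 v).
  assert (X0 : d2 (q F1 n0) V = r0^2).
  { unfold V. rewrite <- L0, len_sym. apply (HU_d2 L S q); auto. }
  assert (X1 : d2 (q F1 n1) V = r1^2).
  { unfold V. rewrite <- L1, len_sym. apply (HU_d2 L S q); auto. }
  assert (X2 : d2 (q F1 n1) (q F1 n0) = r0^2 + r1^2 - 2*r0*r1*cos th85).
  { rewrite <- Q1, len_sym. apply (HU_d2 L S q); auto. }
  destruct (frame V (q F1 n0) (q F1 n1) r0 r1 th85 R0 R1 X0 X1 X2) as [u [w [Ou [P0 P1]]]].
  destruct (fan_step2 L S q F1 F2 v n0 n1 n2 V u w r0 r1 r2 th85 0 th85 (2*th85)
    HU Ou A1 A2 A3 B1 B2 B3 v0 m1 v1 v2 m2 f12 c1 R0 R1 R2 L2 Q2 eq_refl P0 P1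
    ltac:(ring) ltac:(ring)) as [G0 [G1 G2]].
  destruct (fan_step2 L S q F2 F3 v n1 n2 n3 V u w r1 r2 r3 th85 th85 (2*th85) (3*th85)
    HU Ou B1 B2 B3 C1 C2 C3 v1 m2 v2 v3 m3 f23 c2 R1 R2 R3 L3 Q3 G0 G1 G2
    ltac:(ring) ltac:(ring)) as [H0 [H1 H2]].
  destruct (fan_step2 L S q F3 F4 v n2 n3 n4 V u w r2 r3 r4 th85 (2*th85) (3*th85) (4*th85)
    HU Ou C1 C2 C3 D1 D2 D3 v2 m3 v3 v4 m4 f34 c3 R2 R3 R4 L4 Q4 H0 H1 H2
    ltac:(ring) ltac:(ring)) as [I0 [I1 I2]].
  destruct (fan_step2 L S q F4 F5 v n3 n4 n5 V u w r3 r4 r5 th85 (3*th85) (4*th85) (5*th85)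
    HU Ou D1 D2 D3 E1 E2 E3 v3 m4 v4 v5 m5 f45 c4 R3 R4 R5 L5 Q5 I0 I1 I2
    ltac:(ring) ltac:(ring)) as [J0 [J1 J2]].
  rewrite <- at_2pi in P0.
  apply (ray_in_wedge L S q F5 F1 v n4 n5 v n0 n1 V u w r4 r5 r0 (4*th85) (5*th85) (2*PI)
    HU f51 E1 E2 E3 v4 m5 v5 A1 A2 A3 v0 m1 v1 J0 J1 J2 eq_refl P0 R4 R5 R0).
  - replace (5 * th85 - 4 * th85) with (deg 85) by (unfold th85; ring). apply sin_deg_pos; lra.
  - replace (5 * th85 - 2 * PI) with (deg 65) by (unfold th85, deg; field). apply sin_deg_pos; lra.
  - replace (2 * PI - 4 * th85) with (deg 20) by (unfold th85, deg; field). apply sin_deg_pos; lra.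
Qed.

Ltac ifc := unfold in_face; simpl;
  first [left; reflexivity | right; left; reflexivity | right; right; reflexivity].

Lemma at_mpi V u w r t : at_ V u w r (t - PI) =
  (fst V - r * (cos t * fst u + sin t * fst w), snd V - r * (cos t * snd u + sin t * snd w)).
Proof. unfold at_. rewrite cos_minus, sin_minus, cos_PI, sin_PI. f_equal; ring. Qed.

Lemma obsO L S q : 0 < L -> is_unfolding L S q ->
  ~ cut S O (P i0) -> ~ cut S O (P i1) -> ~ cut S O (P i2) -> False.
Proof.
  intros HL HU c0 c1 c2.
  set (V := q (Crown i0) O).
  assert (X0 : d2 (q (Crown i0) (P i0)) V = L^2).
  { unfold V. replace (L^2) with ((len L (P i0) O)^2) by reflexivity. apply (HU_d2 L S q); [exact HU|ifc|ifc|discriminate]. }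
  assert (X1 : d2 (q (Crown i0) (P i1)) V = L^2).
  { unfold V. replace (L^2) with ((len L (P i1) O)^2) by reflexivity. apply (HU_d2 L S q); [exact HU|ifc|ifc|discriminate]. }
  assert (X2 : d2 (q (Crown i0) (P i1)) (q (Crown i0) (P i0)) = L^2 + L^2 - 2*L*L*cos (deg 10)).
  { rewrite <- LC_O. change (base_len L (deg 10)) with (len L (P i1) (P i0)).
    apply (HU_d2 L S q); [exact HU|ifc|ifc|discriminate]. }
  destruct (frame V _ _ L L (deg 10) HL HL X0 X1 X2) as [u [w [Ou [P0 P1]]]].
  destruct (fan_step2 L S q (Crown i0) (Crown i1) O (P i0) (P i1) (P i2) V u w L L L (deg 10)
     0 (deg 10) (2 * deg 10) HU Ou ltac:(ifc) ltac:(ifc) ltac:(ifc) ltac:(ifc) ltac:(ifc) ltac:(ifc)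
     ltac:(discriminate) ltac:(discriminate) ltac:(discriminate) ltac:(discriminate) ltac:(discriminate)
     ltac:(discriminate) c1 HL HL HL eq_refl (LC_O L) eq_refl P0 P1 ltac:(ring) ltac:(ring))
    as [G0 [G1 G2]].
  destruct (fan_step2 L S q (Crown i1) (Crown i2) O (P i1) (P i2) (P i0) V u w L L L (deg 10)
     (deg 10) (2 * deg 10) (3 * deg 10) HU Ou ltac:(ifc) ltac:(ifc) ltac:(ifc) ltac:(ifc) ltac:(ifc) ltac:(ifc)
     ltac:(discriminate) ltac:(discriminate) ltac:(discriminate) ltac:(discriminate) ltac:(discriminate)
     ltac:(discriminate) c2 HL HL HL eq_refl (LC_O L) G0 G1 G2 ltac:(ring) ltac:(ring))
    as [H0 [H1 H2]].
  destruct HU as [_ [HG _]].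
  destruct (HG (Crown i2) (Crown i0) O (P i0)) as [_ E].
  { repeat split; try ifc; try discriminate. exact c0. }
  rewrite H2, P0 in E. unfold at_ in E. rewrite cos_0, sin_0 in E.
  injection E as E1 E2.
  destruct Ou as [O1 [O2 O3]].
  set (c := cos (3 * deg 10)) in *. set (s := sin (3 * deg 10)) in *.
  assert (F1 : c * fst u + s * fst w = fst u).
  { apply Rmult_eq_reg_l with L; [|lra]. lra. }
  assert (F2 : c * snd u + s * snd w = snd u).
  { apply Rmult_eq_reg_l with L; [|lra]. lra. }
  apply cos30. fold c.
    assert (Hc : c = fst u * (c * fst u + s * fst w) + snd u * (c * snd u + s * snd w)
     - s * (fst u * fst w + snd u * snd w) - c * (fst u ^ 2 + snd u ^ 2 - 1)) by ring.
  rewrite F1, F2, O3, O1 in Hc. rewrite Hc. rewrite <- O1. ring.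
Qed.

Lemma at_back V u w r t : at_ (at_ V u w r t) u w r (t - PI) = V.
Proof. rewrite at_mpi. unfold at_. cbn [fst snd]. destruct V; cbn [fst snd]. f_equal; ring. Qed.

Lemma at_trans V u w L dd : dd = 2 * L * cos th85 ->
  at_ V u w L (3*th85) = at_ (at_ V u w dd (4*th85)) u w L (5*th85 - PI).
Proof. intro Hd. rewrite at_mpi. unfold at_; cbn [fst snd].
  replace (3*th85) with (4*th85 - th85) by ring. replace (5*th85) with (4*th85 + th85) by ring.
  rewrite cos_minus, sin_minus, cos_plus, sin_plus, Hd. f_equal; ring. Qed.

Lemma cos_via C : sin th85 * cos C = sin (th85 - C) + sin C * cos th85.
Proof. rewrite sin_minus. ring. Qed.

Lemma obs4 L S q F1 F2 F3 F4 F5 F6 v n0 n1 n2 n3 n4 m2 :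
  0 < L -> is_unfolding L S q ->
  in_face F1 v -> in_face F1 n0 -> in_face F1 n1 ->
  in_face F2 v -> in_face F2 n1 -> in_face F2 n2 ->
  in_face F3 v -> in_face F3 n2 -> in_face F3 n3 ->
  in_face F4 v -> in_face F4 n3 -> in_face F4 n4 ->
  in_face F5 n4 -> in_face F5 n3 -> in_face F5 m2 ->
  in_face F6 n4 -> in_face F6 m2 -> in_face F6 n1 ->
  v <> n0 -> v <> n1 -> v <> n2 -> v <> n3 -> v <> n4 ->
  n0 <> n1 -> n1 <> n2 -> n2 <> n3 -> n3 <> n4 -> n4 <> m2 -> n3 <> m2 -> m2 <> n1 -> n4 <> n1 ->
  F1 <> F2 -> F2 <> F3 -> F3 <> F4 -> F4 <> F5 -> F5 <> F6 -> F1 <> F6 ->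
  ~ cut S v n1 -> ~ cut S v n2 -> ~ cut S v n3 -> ~ cut S n4 n3 -> ~ cut S n4 m2 ->
  len L v n0 = L -> len L v n1 = base_len L (deg 10) -> len L v n2 = L -> len L v n3 = L ->
  len L v n4 = base_len L (deg 10) -> len L n4 m2 = L -> len L n4 n1 = base_len L (deg 10) ->
  (len L n0 n1)^2 = L^2 + (base_len L (deg 10))^2 - 2*L*(base_len L (deg 10))*cos th85 ->
  (len L n1 n2)^2 = (base_len L (deg 10))^2 + L^2 - 2*(base_len L (deg 10))*L*cos th85 ->
  (len L n2 n3)^2 = L^2 + L^2 - 2*L*L*cos th85 ->
  (len L n3 n4)^2 = L^2 + (base_len L (deg 10))^2 - 2*L*(base_len L (deg 10))*cos th85 ->
  (len L n3 m2)^2 = L^2 + L^2 - 2*L*L*cos th85 ->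
  (len L m2 n1)^2 = L^2 + (base_len L (deg 10))^2 - 2*L*(base_len L (deg 10))*cos th85 ->
  False.
Proof.
  intros HL HU A1 A2 A3 B1 B2 B3 C1 C2 C3 D1 D2 D3 E1 E2 E3 G1' G2' G3'
    v0 v1 v2 v3 v4 m01 m12 m23 m34 m4x m3x mx1 m41
    f12 f23 f34 f45 f56 f16 c1 c2 c3 c4 c5 L0 L1 L2 L3 L4 L5 L6 Q1 Q2 Q3 Q4 Q5 Q6.
  set (dd := base_len L (deg 10)) in *.
  assert (Hdd : 0 < dd) by (apply dd_pos; exact HL).
  assert (Edd : dd = 2 * L * cos th85) by apply dd_eq.
  set (V := q F1 v).
  assert (X0 : d2 (q F1 n0) V = L^2).
  { unfold V. rewrite <- L0, len_sym. apply (HU_d2 L S q); auto. }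
  assert (X1 : d2 (q F1 n1) V = dd^2).
  { unfold V. rewrite <- L1, len_sym. apply (HU_d2 L S q); auto. }
  assert (X2 : d2 (q F1 n1) (q F1 n0) = L^2 + dd^2 - 2*L*dd*cos th85).
  { rewrite <- Q1, len_sym. apply (HU_d2 L S q); auto. }
  destruct (frame V (q F1 n0) (q F1 n1) L dd th85 HL Hdd X0 X1 X2) as [u [w [Ou [P0 P1]]]].
  destruct (fan_step2 L S q F1 F2 v n0 n1 n2 V u w L dd L th85 0 th85 (2*th85)
    HU Ou A1 A2 A3 B1 B2 B3 v0 m01 v1 v2 m12 f12 c1 HL Hdd HL L2 Q2 eq_refl P0 P1
    ltac:(ring) ltac:(ring)) as [G0 [G1 G2]].
  destruct (fan_step2 L S q F2 F3 v n1 n2 n3 V u w dd L L th85 th85 (2*th85) (3*th85)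
    HU Ou B1 B2 B3 C1 C2 C3 v1 m12 v2 v3 m23 f23 c2 Hdd HL HL L3 Q3 G0 G1 G2
    ltac:(ring) ltac:(ring)) as [H0 [H1 H2]].
  destruct (fan_step2 L S q F3 F4 v n2 n3 n4 V u w L L dd th85 (2*th85) (3*th85) (4*th85)
    HU Ou C1 C2 C3 D1 D2 D3 v2 m23 v3 v4 m34 f34 c3 HL HL Hdd L4 Q4 H0 H1 H2
    ltac:(ring) ltac:(ring)) as [I0 [I1 I2]].
  set (Y := at_ V u w dd (4*th85)).
  assert (J0 : q F4 v = at_ Y u w dd (4*th85 - PI)) by (unfold Y; rewrite at_back; exact I0).
  assert (J1 : q F4 n3 = at_ Y u w L (5*th85 - PI)) by (unfold Y; rewrite <- at_trans; auto).
  destruct (fan_step2 L S q F4 F5 n4 v n3 m2 Y u w dd L L th85 (4*th85 - PI) (5*th85 - PI) (6*th85 - PI)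
    HU Ou D3 D1 D2 E1 E2 E3 ltac:(auto) v3 ltac:(auto) m4x m3x f45 c4 Hdd HL HL L5 Q5 I2 J0 J1
    ltac:(ring) ltac:(ring)) as [K0 [Kq1 Kq2]].
  destruct (fan_step2 L S q F5 F6 n4 n3 m2 n1 Y u w L L dd th85 (5*th85 - PI) (6*th85 - PI) (7*th85 - PI)
    HU Ou E1 E2 E3 G1' G2' G3' ltac:(auto) m3x m4x m41 mx1 f56 c5 HL HL Hdd L6 Q6 K0 Kq1 Kq2
    ltac:(ring) ltac:(ring)) as [M0 [M1 M2]].
  pose proof NK1 as N1. pose proof NK2 as N2. pose proof NK3 as N3.
  assert (Sth : 0 < sin th85) by (unfold th85; apply sin_deg_pos; lra).
  set (K1 := sin (th85 - 4*th85) - sin (th85 - 7*th85)) in *.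
  set (K2 := sin (4*th85) - sin (7*th85)) in *.
  set (b := dd * K1 / (L * sin th85)).
  set (c := K2 / sin th85).
  assert (Hb : 0 < b).
  { unfold b. apply Rdiv_lt_0_compat; [apply Rmult_lt_0_compat; lra|apply Rmult_lt_0_compat; lra]. }
  assert (Hc : 0 < c) by (unfold c; apply Rdiv_lt_0_compat; lra).
  assert (Ha : 0 < 1 - b - c).
  { replace (1 - b - c) with ((sin th85 - 2 * cos th85 * K1 - K2) / sin th85)
      by (unfold b, c; rewrite Edd; field; split; lra).
    apply Rdiv_lt_0_compat; lra. }
  apply (no_overlap L S q F1 F6 v n0 n1 n1 n4 m2 (1 - b - c) b c 1 0 0 HU f16
     A1 A2 A3 v0 m01 v1 G3' G1' G2' ltac:(auto) m4x ltac:(auto) Ha Hb Hc ltac:(ring)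
     ltac:(lra) ltac:(lra) ltac:(lra) ltac:(ring));
   rewrite M2, P0, P1; unfold V in *; unfold Y; rewrite at_mpi; unfold at_; cbn [fst snd];
   rewrite cos_0, sin_0;
   assert (T4 := cos_via (4*th85)); assert (T7 := cos_via (7*th85));
   replace (cos (4*th85)) with ((sin (th85 - 4*th85) + sin (4*th85) * cos th85) / sin th85)
     by (rewrite <- T4; field; lra);
   replace (cos (7*th85)) with ((sin (th85 - 7*th85) + sin (7*th85) * cos th85) / sin th85)
     by (rewrite <- T7; field; lra);
   unfold b, c, K1, K2; field; split; lra.
Qed.

Ltac solve_side :=
  first [ assumption | ifc | discriminate | reflexivity
        | (apply dd_pos; assumption)
        | (cbn [len]; first [apply LC_Ld | apply LC_dL | apply LC_LL]) ].

Lemma obsP_0_0 L S q : 0 < L -> is_unfolding L S q -> ~ cut S (P i0) (A i2) -> ~ cut S (P i0) (P i1) -> ~ cut S (P i0) O -> ~ cut S (P i0) (P i2) -> False.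
Proof. intros HL HU c1 c2 c3 c4.
  apply (fan5 L S q (Brim i1) (Band i2) (Crown i0) (Crown i2) (Band i1) (P i0) (A i1) (A i2) (P i1) O (P i2) (A i1) L L (base_len L (deg 10)) L (base_len L (deg 10)) L); solve_side.
Qed.

Lemma obsP_0_1 L S q : 0 < L -> is_unfolding L S q -> ~ cut S (P i0) (P i1) -> ~ cut S (P i0) O -> ~ cut S (P i0) (P i2) -> ~ cut S (P i0) (A i1) -> False.
Proof. intros HL HU c1 c2 c3 c4.
  apply (fan5 L S q (Band i2) (Crown i0) (Crown i2) (Band i1) (Brim i1) (P i0) (A i2) (P i1) O (P i2) (A i1) (A i2) L (base_len L (deg 10)) L (base_len L (deg 10)) L L); solve_side.
Qed.

Lemma obsP_0_2 L S q : 0 < L -> is_unfolding L S q -> ~ cut S (P i0) O -> ~ cut S (P i0) (P i2) -> ~ cut S (P i0) (A i1) -> ~ cut S (P i0) (A i2) -> False.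
Proof. intros HL HU c1 c2 c3 c4.
  apply (fan5 L S q (Crown i0) (Crown i2) (Band i1) (Brim i1) (Band i2) (P i0) (P i1) O (P i2) (A i1) (A i2) (P i1) (base_len L (deg 10)) L (base_len L (deg 10)) L L (base_len L (deg 10))); solve_side.
Qed.

Lemma obsP_0_3 L S q : 0 < L -> is_unfolding L S q -> ~ cut S (P i0) (P i2) -> ~ cut S (P i0) (A i1) -> ~ cut S (P i0) (A i2) -> ~ cut S (P i0) (P i1) -> False.
Proof. intros HL HU c1 c2 c3 c4.
  apply (fan5 L S q (Crown i2) (Band i1) (Brim i1) (Band i2) (Crown i0) (P i0) O (P i2) (A i1) (A i2) (P i1) O L (base_len L (deg 10)) L L (base_len L (deg 10)) L); solve_side.
Qed.

Lemma obsP_0_4 L S q : 0 < L -> is_unfolding L S q -> ~ cut S (P i0) (A i1) -> ~ cut S (P i0) (A i2) -> ~ cut S (P i0) (P i1) -> ~ cut S (P i0) O -> False.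
Proof. intros HL HU c1 c2 c3 c4.
  apply (fan5 L S q (Band i1) (Brim i1) (Band i2) (Crown i0) (Crown i2) (P i0) (P i2) (A i1) (A i2) (P i1) O (P i2) (base_len L (deg 10)) L L (base_len L (deg 10)) L (base_len L (deg 10))); solve_side.
Qed.

Lemma obsP_1_0 L S q : 0 < L -> is_unfolding L S q -> ~ cut S (P i1) (A i0) -> ~ cut S (P i1) (P i2) -> ~ cut S (P i1) O -> ~ cut S (P i1) (P i0) -> False.
Proof. intros HL HU c1 c2 c3 c4.
  apply (fan5 L S q (Brim i2) (Band i0) (Crown i1) (Crown i0) (Band i2) (P i1) (A i2) (A i0) (P i2) O (P i0) (A i2) L L (base_len L (deg 10)) L (base_len L (deg 10)) L); solve_side.
Qed.

Lemma obsP_1_1 L S q : 0 < L -> is_unfolding L S q -> ~ cut S (P i1) (P i2) -> ~ cut S (P i1) O -> ~ cut S (P i1) (P i0) -> ~ cut S (P i1) (A i2) -> False.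
Proof. intros HL HU c1 c2 c3 c4.
  apply (fan5 L S q (Band i0) (Crown i1) (Crown i0) (Band i2) (Brim i2) (P i1) (A i0) (P i2) O (P i0) (A i2) (A i0) L (base_len L (deg 10)) L (base_len L (deg 10)) L L); solve_side.
Qed.

Lemma obsP_1_2 L S q : 0 < L -> is_unfolding L S q -> ~ cut S (P i1) O -> ~ cut S (P i1) (P i0) -> ~ cut S (P i1) (A i2) -> ~ cut S (P i1) (A i0) -> False.
Proof. intros HL HU c1 c2 c3 c4.
  apply (fan5 L S q (Crown i1) (Crown i0) (Band i2) (Brim i2) (Band i0) (P i1) (P i2) O (P i0) (A i2) (A i0) (P i2) (base_len L (deg 10)) L (base_len L (deg 10)) L L (base_len L (deg 10))); solve_side.
Qed.

Lemma obsP_1_3 L S q : 0 < L -> is_unfolding L S q -> ~ cut S (P i1) (P i0) -> ~ cut S (P i1) (A i2) -> ~ cut S (P i1) (A i0) -> ~ cut S (P i1) (P i2) -> False.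
Proof. intros HL HU c1 c2 c3 c4.
  apply (fan5 L S q (Crown i0) (Band i2) (Brim i2) (Band i0) (Crown i1) (P i1) O (P i0) (A i2) (A i0) (P i2) O L (base_len L (deg 10)) L L (base_len L (deg 10)) L); solve_side.
Qed.

Lemma obsP_1_4 L S q : 0 < L -> is_unfolding L S q -> ~ cut S (P i1) (A i2) -> ~ cut S (P i1) (A i0) -> ~ cut S (P i1) (P i2) -> ~ cut S (P i1) O -> False.
Proof. intros HL HU c1 c2 c3 c4.
  apply (fan5 L S q (Band i2) (Brim i2) (Band i0) (Crown i1) (Crown i0) (P i1) (P i0) (A i2) (A i0) (P i2) O (P i0) (base_len L (deg 10)) L L (base_len L (deg 10)) L (base_len L (deg 10))); solve_side.
Qed.

Lemma obsP_2_0 L S q : 0 < L -> is_unfolding L S q -> ~ cut S (P i2) (A i1) -> ~ cut S (P i2) (P i0) -> ~ cut S (P i2) O -> ~ cut S (P i2) (P i1) -> False.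
Proof. intros HL HU c1 c2 c3 c4.
  apply (fan5 L S q (Brim i0) (Band i1) (Crown i2) (Crown i1) (Band i0) (P i2) (A i0) (A i1) (P i0) O (P i1) (A i0) L L (base_len L (deg 10)) L (base_len L (deg 10)) L); solve_side.
Qed.

Lemma obsP_2_1 L S q : 0 < L -> is_unfolding L S q -> ~ cut S (P i2) (P i0) -> ~ cut S (P i2) O -> ~ cut S (P i2) (P i1) -> ~ cut S (P i2) (A i0) -> False.
Proof. intros HL HU c1 c2 c3 c4.
  apply (fan5 L S q (Band i1) (Crown i2) (Crown i1) (Band i0) (Brim i0) (P i2) (A i1) (P i0) O (P i1) (A i0) (A i1) L (base_len L (deg 10)) L (base_len L (deg 10)) L L); solve_side.
Qed.

Lemma obsP_2_2 L S q : 0 < L -> is_unfolding L S q -> ~ cut S (P i2) O -> ~ cut S (P i2) (P i1) -> ~ cut S (P i2) (A i0) -> ~ cut S (P i2) (A i1) -> False.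
Proof. intros HL HU c1 c2 c3 c4.
  apply (fan5 L S q (Crown i2) (Crown i1) (Band i0) (Brim i0) (Band i1) (P i2) (P i0) O (P i1) (A i0) (A i1) (P i0) (base_len L (deg 10)) L (base_len L (deg 10)) L L (base_len L (deg 10))); solve_side.
Qed.

Lemma obsP_2_3 L S q : 0 < L -> is_unfolding L S q -> ~ cut S (P i2) (P i1) -> ~ cut S (P i2) (A i0) -> ~ cut S (P i2) (A i1) -> ~ cut S (P i2) (P i0) -> False.
Proof. intros HL HU c1 c2 c3 c4.
  apply (fan5 L S q (Crown i1) (Band i0) (Brim i0) (Band i1) (Crown i2) (P i2) O (P i1) (A i0) (A i1) (P i0) O L (base_len L (deg 10)) L L (base_len L (deg 10)) L); solve_side.
Qed.

Lemma obsP_2_4 L S q : 0 < L -> is_unfolding L S q -> ~ cut S (P i2) (A i0) -> ~ cut S (P i2) (A i1) -> ~ cut S (P i2) (P i0) -> ~ cut S (P i2) O -> False.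
Proof. intros HL HU c1 c2 c3 c4.
  apply (fan5 L S q (Band i0) (Brim i0) (Band i1) (Crown i2) (Crown i1) (P i2) (P i1) (A i0) (A i1) (P i0) O (P i1) (base_len L (deg 10)) L L (base_len L (deg 10)) L (base_len L (deg 10))); solve_side.
Qed.

Lemma obs4_0_1 L S q : 0 < L -> is_unfolding L S q -> ~ cut S (P i0) (P i2) -> ~ cut S (P i0) (A i1) -> ~ cut S (P i0) (A i2) -> ~ cut S (P i1) (A i2) -> ~ cut S (P i1) (A i0) -> False.
Proof. intros HL HU c1 c2 c3 c4 c5.
  apply (obs4 L S q (Crown i2) (Band i1) (Brim i1) (Band i2) (Brim i2) (Band i0) (P i0) O (P i2) (A i1) (A i2) (P i1) (A i0)); solve_side.
Qed.

Lemma obs4_0_2 L S q : 0 < L -> is_unfolding L S q -> ~ cut S (P i0) (P i1) -> ~ cut S (P i0) (A i2) -> ~ cut S (P i0) (A i1) -> ~ cut S (P i2) (A i1) -> ~ cut S (P i2) (A i0) -> False.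
Proof. intros HL HU c1 c2 c3 c4 c5.
  apply (obs4 L S q (Crown i0) (Band i2) (Brim i1) (Band i1) (Brim i0) (Band i0) (P i0) O (P i1) (A i2) (A i1) (P i2) (A i0)); solve_side.
Qed.

Lemma obs4_1_0 L S q : 0 < L -> is_unfolding L S q -> ~ cut S (P i1) (P i2) -> ~ cut S (P i1) (A i0) -> ~ cut S (P i1) (A i2) -> ~ cut S (P i0) (A i2) -> ~ cut S (P i0) (A i1) -> False.
Proof. intros HL HU c1 c2 c3 c4 c5.
  apply (obs4 L S q (Crown i1) (Band i0) (Brim i2) (Band i2) (Brim i1) (Band i1) (P i1) O (P i2) (A i0) (A i2) (P i0) (A i1)); solve_side.
Qed.

Lemma obs4_1_2 L S q : 0 < L -> is_unfolding L S q -> ~ cut S (P i1) (P i0) -> ~ cut S (P i1) (A i2) -> ~ cut S (P i1) (A i0) -> ~ cut S (P i2) (A i0) -> ~ cut S (P i2) (A i1) -> False.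
Proof. intros HL HU c1 c2 c3 c4 c5.
  apply (obs4 L S q (Crown i0) (Band i2) (Brim i2) (Band i0) (Brim i0) (Band i1) (P i1) O (P i0) (A i2) (A i0) (P i2) (A i1)); solve_side.
Qed.

Lemma obs4_2_0 L S q : 0 < L -> is_unfolding L S q -> ~ cut S (P i2) (P i1) -> ~ cut S (P i2) (A i0) -> ~ cut S (P i2) (A i1) -> ~ cut S (P i0) (A i1) -> ~ cut S (P i0) (A i2) -> False.
Proof. intros HL HU c1 c2 c3 c4 c5.
  apply (obs4 L S q (Crown i1) (Band i0) (Brim i0) (Band i1) (Brim i1) (Band i2) (P i2) O (P i1) (A i0) (A i1) (P i0) (A i2)); solve_side.
Qed.

Lemma obs4_2_1 L S q : 0 < L -> is_unfolding L S q -> ~ cut S (P i2) (P i0) -> ~ cut S (P i2) (A i1) -> ~ cut S (P i2) (A i0) -> ~ cut S (P i1) (A i0) -> ~ cut S (P i1) (A i2) -> False.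
Proof. intros HL HU c1 c2 c3 c4 c5.
  apply (obs4 L S q (Crown i2) (Band i1) (Brim i0) (Band i0) (Brim i2) (Band i2) (P i2) O (P i0) (A i1) (A i0) (P i1) (A i2)); solve_side.
Qed.

From Stdlib Require Import List Arith.
Import ListNotations.
Open Scope bool_scope.
Definition obs : list (list (vtx*vtx)) :=
  [[(O, (P i0)); (O, (P i1)); (O, (P i2))];
  [((P i0), (A i2)); ((P i0), (P i1)); ((P i0), O); ((P i0), (P i2))];
  [((P i0), (P i1)); ((P i0), O); ((P i0), (P i2)); ((P i0), (A i1))];
  [((P i0), O); ((P i0), (P i2)); ((P i0), (A i1)); ((P i0), (A i2))];
  [((P i0), (P i2)); ((P i0), (A i1)); ((P i0), (A i2)); ((P i0), (P i1))];
  [((P i0), (A i1)); ((P i0), (A i2)); ((P i0), (P i1)); ((P i0), O)];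
  [((P i1), (A i0)); ((P i1), (P i2)); ((P i1), O); ((P i1), (P i0))];
  [((P i1), (P i2)); ((P i1), O); ((P i1), (P i0)); ((P i1), (A i2))];
  [((P i1), O); ((P i1), (P i0)); ((P i1), (A i2)); ((P i1), (A i0))];
  [((P i1), (P i0)); ((P i1), (A i2)); ((P i1), (A i0)); ((P i1), (P i2))];
  [((P i1), (A i2)); ((P i1), (A i0)); ((P i1), (P i2)); ((P i1), O)];
  [((P i2), (A i1)); ((P i2), (P i0)); ((P i2), O); ((P i2), (P i1))];
  [((P i2), (P i0)); ((P i2), O); ((P i2), (P i1)); ((P i2), (A i0))];
  [((P i2), O); ((P i2), (P i1)); ((P i2), (A i0)); ((P i2), (A i1))];
  [((P i2), (P i1)); ((P i2), (A i0)); ((P i2), (A i1)); ((P i2), (P i0))];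
  [((P i2), (A i0)); ((P i2), (A i1)); ((P i2), (P i0)); ((P i2), O)];
  [((P i0), (P i2)); ((P i0), (A i1)); ((P i0), (A i2)); ((P i1), (A i2)); ((P i1), (A i0))];
  [((P i0), (P i1)); ((P i0), (A i2)); ((P i0), (A i1)); ((P i2), (A i1)); ((P i2), (A i0))];
  [((P i1), (P i2)); ((P i1), (A i0)); ((P i1), (A i2)); ((P i0), (A i2)); ((P i0), (A i1))];
  [((P i1), (P i0)); ((P i1), (A i2)); ((P i1), (A i0)); ((P i2), (A i0)); ((P i2), (A i1))];
  [((P i2), (P i1)); ((P i2), (A i0)); ((P i2), (A i1)); ((P i0), (A i1)); ((P i0), (A i2))];
  [((P i2), (P i0)); ((P i2), (A i1)); ((P i2), (A i0)); ((P i1), (A i0)); ((P i1), (A i2))]].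


Definition i3b (a b : I3) : bool :=
  match a, b with i0,i0 | i1,i1 | i2,i2 => true | _,_ => false end.
Definition vtx_beq (u v : vtx) : bool :=
  match u, v with A a, A b => i3b a b | P a, P b => i3b a b | O, O => true | _, _ => false end.
Definition face_beq (f g : face) : bool :=
  match f, g with Brim a, Brim b => i3b a b | Band a, Band b => i3b a b
  | Crown a, Crown b => i3b a b | _, _ => false end.

Lemma i3b_ok a b : i3b a b = true <-> a = b.
Proof. destruct a, b; simpl; split; congruence. Qed.
Lemma vtx_beq_ok u v : vtx_beq u v = true <-> u = v.
Proof. destruct u as [a|a|], v as [b|b|]; simpl; try rewrite i3b_ok; split; congruence. Qed.
Lemma face_beq_ok f g : face_beq f g = true <-> f = g.
Proof. destruct f as [a|a|a], g as [b|b|b]; simpl; try rewrite i3b_ok; split; congruence. Qed.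

Definition in_faceb (f : face) (v : vtx) : bool :=
  let '(a,b,c) := face_verts f in vtx_beq v a || vtx_beq v b || vtx_beq v c.
Lemma in_faceb_ok f v : in_faceb f v = true <-> in_face f v.
Proof. unfold in_faceb, in_face. destruct (face_verts f) as [[a b] c].
  rewrite !Bool.orb_true_iff, !vtx_beq_ok. tauto. Qed.

Definition allI := [i0; i1; i2].
Definition allF := map Brim allI ++ map Band allI ++ map Crown allI.
Definition allV := map A allI ++ map P allI ++ [O].
Lemma allF_ok f : In f allF.
Proof. destruct f as [[]|[]|[]]; simpl; tauto. Qed.
Lemma allV_ok v : In v allV.
Proof. destruct v as [[]|[]|]; simpl; tauto. Qed.

Definition ed : list (vtx*vtx) :=
  [(O, P i0); (O, P i1); (O, P i2); (P i0, P i1); (P i1, P i2); (P i2, P i0);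
   (A i0, P i1); (A i0, P i2); (A i1, P i2); (A i1, P i0); (A i2, P i0); (A i2, P i1)].

Fixpoint idx_aux (u v : vtx) (l : list (vtx*vtx)) (n : nat) : nat :=
  match l with
  | [] => n
  | (a,b) :: t => if (vtx_beq u a && vtx_beq v b) || (vtx_beq u b && vtx_beq v a) then 0
                  else S (idx_aux u v t n)
  end.
Definition idx u v := idx_aux u v ed 0.

Definition lk (bs : list bool) (e : vtx*vtx) : bool := nth (idx (fst e) (snd e)) bs false.

Definition shared (f g : face) : option nat :=
  match f, g with
  | Brim i0, Band i0 => Some 7%nat
  | Brim i0, Band i1 => Some 8%nat
  | Band i0, Brim i0 => Some 7%nat
  | Band i0, Crown i1 => Some 4%nat
  | Band i0, Brim i2 => Some 6%nat
  | Crown i0, Crown i1 => Some 1%nat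
  | Crown i0, Band i2 => Some 3%nat
  | Crown i0, Crown i2 => Some 0%nat
  | Brim i1, Band i1 => Some 9%nat
  | Brim i1, Band i2 => Some 10%nat
  | Band i1, Brim i0 => Some 8%nat
  | Band i1, Brim i1 => Some 9%nat
  | Band i1, Crown i2 => Some 5%nat
  | Crown i1, Band i0 => Some 4%nat
  | Crown i1, Crown i0 => Some 1%nat
  | Crown i1, Crown i2 => Some 2%nat
  | Brim i2, Band i0 => Some 6%nat
  | Brim i2, Band i2 => Some 11%nat
  | Band i2, Crown i0 => Some 3%nat
  | Band i2, Brim i1 => Some 10%nat
  | Band i2, Brim i2 => Some 11%nat
  | Crown i2, Crown i0 => Some 0%nat
  | Crown i2, Band i1 => Some 5%nat
  | Crown i2, Crown i1 => Some 2%nat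
  | _, _ => None
  end.

Definition adjb (bs : list bool) (f g : face) : bool :=
  match shared f g with Some k => negb (nth k bs false) | None => false end.

Fixpoint fidx_aux (f : face) (l : list face) : nat :=
  match l with [] => 0 | g :: t => if face_beq f g then 0 else S (fidx_aux f t) end.
Definition cget (C : list bool) (f : face) : bool := nth (fidx_aux f allF) C false.
Definition cstep (bs : list bool) (C : list bool) : list bool :=
  map (fun g => if cget C g then true else
     existsb (fun f => if cget C f then adjb bs f g else false) allF) allF.
Definition clos (bs : list bool) : list bool :=
  Nat.iter 9 (cstep bs) (map (fun f => face_beq f (Brim i0)) allF).
Definition closedb bs C :=
  forallb (fun f => forallb (fun g => if cget C f then (if adjb bs f g then cget C g else true)
     else true) allF) allF.
Definition notfull C := existsb (fun f => negb (cget C f)) allF.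

Definition good (bs : list bool) : bool :=
  if forallb (fun ob => existsb (lk bs) ob) obs then
    let C := clos bs in closedb bs C && notfull C && cget C (Brim i0)
  else true.

Fixpoint all_bs (n : nat) : list (list bool) :=
  match n with 0 => [[]] | S m => flat_map (fun l => [true :: l; false :: l]) (all_bs m) end.

Lemma all_bs_ok : forall n l, length l = n -> In l (all_bs n).
Proof.
  induction n as [|n IH]; intros l Hl.
  - destruct l; [simpl; auto|discriminate].
  - destruct l as [|b l]; [discriminate|]. simpl in Hl. injection Hl as Hl.
    simpl. apply in_flat_map. exists l. split; [apply IH; auto|].
    destruct b; simpl; auto.
Qed.

Lemma check_all : forallb good (all_bs 12) = true.
Proof. vm_compute. reflexivity. Qed.

Lemma check_idx : forallb (fun ob => forallb (fun e => Nat.ltb (idx (fst e) (snd e)) 12) ob) obs = true.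
Proof. vm_compute. reflexivity. Qed.

Definition pair_beq (e e' : vtx*vtx) := vtx_beq (fst e) (fst e') && vtx_beq (snd e) (snd e').

Lemma check_idx_ok : forallb (fun u => forallb (fun v =>
   negb (Nat.ltb (idx u v) 12) || pair_beq (nth (idx u v) ed (O,O)) (u,v)
   || pair_beq (nth (idx u v) ed (O,O)) (v,u)) allV) allV = true.
Proof. vm_compute. reflexivity. Qed.

Definition opt_eqb (a b : option nat) : bool :=
  match a, b with Some x, Some y => Nat.eqb x y | None, None => true | _, _ => false end.

Lemma check_edge : forallb (fun f => forallb (fun g => forallb (fun u => forallb (fun v =>
   if negb (face_beq f g) && negb (vtx_beq u v) && in_faceb f u && in_faceb f v
         && in_faceb g u && in_faceb g v then Nat.ltb (idx u v) 12 && opt_eqb (shared f g) (Some (idx u v))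
   else true) allV) allV) allF) allF = true.
Proof. vm_compute. reflexivity. Qed.

Definition bitS (S : vtx -> vtx -> Prop) (e : vtx*vtx) : bool :=
  if excluded_middle_informative (cut S (fst e) (snd e)) then true else false.
Definition bs0 S := map (bitS S) ed.

Lemma bitS_ok S e : bitS S e = true <-> cut S (fst e) (snd e).
Proof. unfold bitS. destruct excluded_middle_informative; split; congruence || tauto. Qed.

Lemma idx_ok u v : (idx u v < 12)%nat -> nth (idx u v) ed (O,O) = (u,v) \/ nth (idx u v) ed (O,O) = (v,u).
Proof.
  intro H. pose proof check_idx_ok as C. rewrite forallb_forall in C.
  specialize (C u (allV_ok u)). rewrite forallb_forall in C. specialize (C v (allV_ok v)).
  apply Nat.ltb_lt in H. rewrite H in C. cbn [negb orb] in C.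
  unfold pair_beq in C. destruct (nth (idx u v) ed (O,O)) as [a b].
  apply Bool.orb_true_iff in C. destruct C as [C|C]; apply andb_prop in C; destruct C as [C1 C2];
    simpl in C1, C2; apply vtx_beq_ok in C1; apply vtx_beq_ok in C2; first [left; congruence | right; congruence].
Qed.

Lemma lk_cut S u v : (idx u v < 12)%nat -> (lk (bs0 S) (u,v) = true <-> cut S u v).
Proof.
  intro H. unfold lk, bs0. simpl fst. simpl snd.
  rewrite nth_indep with (d' := bitS S (O,O)) by (rewrite length_map; exact H).
  rewrite map_nth. rewrite bitS_ok.
  destruct (idx_ok u v H) as [E|E]; rewrite E; simpl; unfold cut; tauto.
Qed.

Lemma glued_adj S f g u v : glued S f g u v -> adjb (bs0 S) f g = true.
Proof.
  intros [Hfg [Huv [Fu [Fv [Gu [Gv Hc]]]]]].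
  pose proof check_edge as C.
  rewrite forallb_forall in C. specialize (C f (allF_ok f)).
  rewrite forallb_forall in C. specialize (C g (allF_ok g)).
  rewrite forallb_forall in C. specialize (C u (allV_ok u)).
  rewrite forallb_forall in C. specialize (C v (allV_ok v)).
  assert (E1 : face_beq f g = false).
  { destruct (face_beq f g) eqn:E; [apply face_beq_ok in E; congruence|reflexivity]. }
  assert (E2 : vtx_beq u v = false).
  { destruct (vtx_beq u v) eqn:E; [apply vtx_beq_ok in E; congruence|reflexivity]. }
  apply in_faceb_ok in Fu, Fv, Gu, Gv.
  rewrite E1, E2, Fu, Fv, Gu, Gv in C. simpl in C.
  apply andb_prop in C. destruct C as [C1 C2]. apply Nat.ltb_lt in C1.
  unfold adjb. destruct (shared f g) as [k|]; [|discriminate].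
  simpl in C2. apply Nat.eqb_eq in C2. subst k.
  destruct (lk (bs0 S) (u,v)) eqn:E.
  - apply (lk_cut S u v C1) in E. contradiction.
  - unfold lk in E. cbn [fst snd] in E. rewrite E. reflexivity.
Qed.

Ltac inl := simpl; repeat (first [left; reflexivity | right]).
Ltac cutt := match goal with H : forall e, In e _ -> ~ cut _ _ _ |- ~ cut _ ?a ?b => apply (H (a,b)); inl end.

Lemma obs_ok L S q : 0 < L -> is_unfolding L S q ->
  forall ob, In ob obs -> existsb (lk (bs0 S)) ob = true.
Proof.
  intros HL HU ob Hin.
  destruct (existsb (lk (bs0 S)) ob) eqn:E; [reflexivity|exfalso].
  assert (Hob : forall e, In e ob -> ~ cut S (fst e) (snd e)).
  { intros e He Hc.
    assert (Hi : (idx (fst e) (snd e) < 12)%nat).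
    { pose proof check_idx as C. rewrite forallb_forall in C. specialize (C ob Hin).
      rewrite forallb_forall in C. specialize (C e He). apply Nat.ltb_lt in C. exact C. }
    apply (lk_cut S (fst e) (snd e) Hi) in Hc. destruct e as [a b]. simpl in Hc.
    assert (existsb (lk (bs0 S)) ob = true) by (apply existsb_exists; exists (a,b); auto).
    congruence. }
  clear E. unfold obs in Hin.
  destruct Hin as [<-|Hin]; [apply (obsO L S q HL HU); cutt|].
  destruct Hin as [<-|Hin]; [apply (obsP_0_0 L S q HL HU); cutt|].
  destruct Hin as [<-|Hin]; [apply (obsP_0_1 L S q HL HU); cutt|].
  destruct Hin as [<-|Hin]; [apply (obsP_0_2 L S q HL HU); cutt|].
  destruct Hin as [<-|Hin]; [apply (obsP_0_3 L S q HL HU); cutt|].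
  destruct Hin as [<-|Hin]; [apply (obsP_0_4 L S q HL HU); cutt|].
  destruct Hin as [<-|Hin]; [apply (obsP_1_0 L S q HL HU); cutt|].
  destruct Hin as [<-|Hin]; [apply (obsP_1_1 L S q HL HU); cutt|].
  destruct Hin as [<-|Hin]; [apply (obsP_1_2 L S q HL HU); cutt|].
  destruct Hin as [<-|Hin]; [apply (obsP_1_3 L S q HL HU); cutt|].
  destruct Hin as [<-|Hin]; [apply (obsP_1_4 L S q HL HU); cutt|].
  destruct Hin as [<-|Hin]; [apply (obsP_2_0 L S q HL HU); cutt|].
  destruct Hin as [<-|Hin]; [apply (obsP_2_1 L S q HL HU); cutt|].
  destruct Hin as [<-|Hin]; [apply (obsP_2_2 L S q HL HU); cutt|].
  destruct Hin as [<-|Hin]; [apply (obsP_2_3 L S q HL HU); cutt|].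
  destruct Hin as [<-|Hin]; [apply (obsP_2_4 L S q HL HU); cutt|].
  destruct Hin as [<-|Hin]; [apply (obs4_0_1 L S q HL HU); cutt|].
  destruct Hin as [<-|Hin]; [apply (obs4_0_2 L S q HL HU); cutt|].
  destruct Hin as [<-|Hin]; [apply (obs4_1_0 L S q HL HU); cutt|].
  destruct Hin as [<-|Hin]; [apply (obs4_1_2 L S q HL HU); cutt|].
  destruct Hin as [<-|Hin]; [apply (obs4_2_0 L S q HL HU); cutt|].
  destruct Hin as [<-|Hin]; [apply (obs4_2_1 L S q HL HU); cutt|].
  destruct Hin.
Qed.

Lemma good_spec bs : good bs = true -> forallb (fun ob => existsb (lk bs) ob) obs = true ->
  closedb bs (clos bs) = true /\ notfull (clos bs) = true /\ cget (clos bs) (Brim i0) = true.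
Proof.
  intros G H. unfold good in G. rewrite H in G.
  change (closedb bs (clos bs) && notfull (clos bs) && cget (clos bs) (Brim i0) = true) in G.
  apply andb_prop in G. destruct G as [G H0]. apply andb_prop in G. destruct G as [Hcl Hnf].
  auto.
Qed.

Lemma reach_lemma S C : closedb (bs0 S) C = true -> forall x y,
  clos_refl_trans face (fun f g => exists u v, glued S f g u v) x y ->
  cget C x = true -> cget C y = true.
Proof.
  intro Hcl. induction 1 as [x y [u [v Hg]]| x | x y z _ IH1 _ IH2].
  - intro Hx. apply glued_adj in Hg.
    unfold closedb in Hcl. rewrite forallb_forall in Hcl. specialize (Hcl x (allF_ok x)).
    rewrite forallb_forall in Hcl. specialize (Hcl y (allF_ok y)).
    rewrite Hx, Hg in Hcl. exact Hcl.
  - auto.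
  - auto.
Qed.

Lemma notfull_spec C : notfull C = true -> exists f, cget C f = false.
Proof. unfold notfull. intro H. apply existsb_exists in H. destruct H as [f [_ Hf]].
  exists f. destruct (cget C f); [discriminate|reflexivity]. Qed.

Theorem lemma4 : forall L : R, 0 < L ->
  ~ exists S : vtx -> vtx -> Prop,
      (forall u v, S u v -> interior_edge u v) /\
      cut_connected S /\
      exists q : layout, is_unfolding L S q.
Proof.
  intros L HL [S [_ [Hconn [q HU]]]].
  assert (G : good (bs0 S) = true).
  { pose proof check_all as C. rewrite forallb_forall in C. apply C.
    apply all_bs_ok. unfold bs0. rewrite length_map. reflexivity. }
  assert (Hobs : forallb (fun ob => existsb (lk (bs0 S)) ob) obs = true).
  { apply forallb_forall. intros ob Hin. apply (obs_ok L S q HL HU ob Hin). }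
  destruct (good_spec (bs0 S) G Hobs) as [Hcl [Hnf H0]].
  destruct (notfull_spec _ Hnf) as [f Hf].
  rewrite (reach_lemma S _ Hcl (Brim i0) f (Hconn (Brim i0) f) H0) in Hf. discriminate.
Qed.
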